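(* Let $A\in\mathbb{R}^{m\times n}$ with columns $A_1,\dots,A_n$, let $y\in\mathbb{R}^m$, $\gamma>0$ and $k\in\{1,\dots,n-1\}$. Let $x^*$ be an optimal solution of (CC) with optimal value $\zeta_{CC}$, set $\varepsilon^*=y-Ax^*$ and $\delta_i=(A_i'\varepsilon^* )^2$ for $i=1,\dots,n$, let $\delta_{[j]}$ denote the $j$-th largest entry of the vector $\delta=(\delta_1,\dots,\delta_n)$, and let $\bar\zeta$ be any number with $\bar\zeta\ge\zeta_C$. Then every optimal solution $(x,z)$ of (MIPC) satisfies, for each $i$: $z_i=0$ if $\delta_i\le\delta_{[k+1]}$ and $\zeta_{CC}-\gamma(\delta_i-\delta_{[k]})>\bar\zeta$; and $z_i=1$ if $\delta_i\ge\delta_{[k]}$ and $\zeta_{CC}+\gamma(\delta_i-\delta_{[k+1]})>\bar\zeta$.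
   Context: For $x_i\in\mathbb{R}$, $z_i\ge 0$ the perspective term $x_i^2/z_i$ is defined with the convention $x_i^2/z_i=0$ if $x_i=z_i=0$ and $x_i^2/z_i=+\infty$ if $z_i=0$, $x_i\neq 0$. (MIPC) is the problem $\zeta_C=\min_{x,z}\ \|y-Ax\|_2^2+\frac1\gamma\sum_{i=1}^n \frac{x_i^2}{z_i}$ subject to $\sum_{i=1}^n z_i\le k$, $x_i(1-z_i)=0$ for $i=1,\dots,n$, $x\in\mathbb{R}^n$, $z\in\{0,1\}^n$ (a mixed-integer formulation of $\min_x \|y-Ax\|_2^2+\frac1\gamma\|x\|_2^2$ s.t. $\|x\|_0\le k$). (CC) is its convex (perspective) relaxation: $\zeta_{CC}=\min_{x,z}\ \|y-Ax\|_2^2+\frac1\gamma\sum_{i=1}^n \frac{x_i^2}{z_i}$ subject to $\sum_{i=1}^n z_i\le k$, $x\in\mathbb{R}^n$, $z\in[0,1]^n$; an optimal solution $x^*$ means the $x$-part of an optimal pair $(x^*,z^* )$. $A_i'$ denotes the transpose of the $i$-th column of $A$. *)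

(* Defs.v *)
From mathcomp Require Import all_boot all_order all_algebra.
From mathcomp Require Import boolp classical_sets reals constructive_ereal ereal.
Set Implicit Arguments. Unset Strict Implicit. Unset Printing Implicit Defensive.
Import Order.TTheory GRing.Theory Num.Theory.
Local Open Scope ring_scope.

Section Defs.
Variables (R : realType) (m n : nat).
Implicit Types (A : 'M[R]_(m, n)) (y : 'cV[R]_m) (x z : 'cV[R]_n).

Definition persp (a b : R) : \bar R :=
  if (b == 0)%R then (if (a == 0)%R then 0%E else +oo%E) else (a ^+ 2 / b)%R%:E.

Definition sqnorm (v : 'cV[R]_m) : R := (\sum_(j < m) v j 0 ^+ 2)%R.

Definition obj A y (gamma : R) x z : \bar R :=
  ((sqnorm (y - A *m x))%:E + (gamma^-1)%:E * \sum_(i < n) persp (x i 0%R) (z i 0%R))%E.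

Definition feasCC (k : nat) x z : Prop :=
  (forall i : 'I_n, 0 <= z i 0 <= 1)%R /\ (\sum_(i < n) z i 0 <= k%:R)%R.

Definition feasC (k : nat) x z : Prop :=
  (forall i : 'I_n, z i 0 = 0 \/ z i 0 = 1)%R /\ (\sum_(i < n) z i 0 <= k%:R)%R /\
  (forall i : 'I_n, x i 0 * (1 - z i 0) = 0)%R.

Definition zetaCC A y gamma k : \bar R :=
  ereal_inf [set v : \bar R | exists x z, feasCC k x z /\ v = obj A y gamma x z].
Definition zetaC A y gamma k : \bar R :=
  ereal_inf [set v : \bar R | exists x z, feasC k x z /\ v = obj A y gamma x z].

Definition optimalCC A y gamma k x z : Prop :=
  feasCC k x z /\ forall x' z', feasCC k x' z' -> (obj A y gamma x z <= obj A y gamma x' z')%E.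
Definition optimalC A y gamma k x z : Prop :=
  feasC k x z /\ forall x' z', feasC k x' z' -> (obj A y gamma x z <= obj A y gamma x' z')%E.

Definition delta A y x (i : 'I_n) : R := (((A^T *m (y - A *m x)) i 0) ^+ 2)%R.

(* delta_[j] : the j-th largest entry of delta (1-indexed j) *)
Definition delta_ord A y x (j : nat) : R :=
  nth 0%R (sort (fun a b : R => (b <= a)%R) [seq delta A y x i | i <- enum 'I_n]) j.-1.

End Defs.

(* Main.v *)
Require Import Defs.
From mathcomp Require Import all_boot all_order all_algebra.
From mathcomp Require Import boolp classical_sets reals constructive_ereal ereal.
From mathcomp Require Import ring lra.
Set Implicit Arguments. Unset Strict Implicit. Unset Printing Implicit Defensive.
Import Order.TTheory GRing.Theory Num.Theory.
Local Open Scope ring_scope.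
Section Sorting.
Variable R : realType.
Local Notation ge := (fun a b : R => b <= a).

Lemma take_succ_le (x : R) (s : seq R) (q : nat) :
  0 <= x -> all (fun b => b <= x) s ->
  \sum_(a <- take q.+1 s) a <= x + \sum_(a <- take q s) a.
Proof.
move=> x0; elim: s q => [|b s IH] q /=.
  by rewrite big_nil addr0.
case/andP=> bx hs; case: q => [|q] /=.
  by rewrite ?take0 !big_cons !big_nil !addr0.
rewrite !big_cons addrCA lerD2l; exact: IH.
Qed.

Lemma sum_subseq_take (s t : seq R) :
  sorted ge s -> all (fun a => 0 <= a) s -> subseq t s ->
  \sum_(a <- t) a <= \sum_(a <- take (size t) s) a.
Proof.
elim: s t => [|x s IH] t.
  by move=> _ _ /eqP ->; rewrite big_nil.
move=> hsort /= /andP[x0 hs].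
have hs' : sorted ge s by apply: (path_sorted hsort).
have hall : all (fun b => b <= x) s.
  have tr : transitive ge by move=> a b c /= h1 h2; apply: le_trans h2 h1.
  exact: (order_path_min tr hsort).
case: t => [|b t] /=; first by rewrite !big_nil.
case: ifP => [/eqP -> | _] hsub.
  by rewrite !big_cons lerD2l; apply: IH.
apply: le_trans (IH _ hs' hs hsub) _.
by rewrite big_cons; apply: take_succ_le.
Qed.

Lemma sum_take_mono (s : seq R) (p q : nat) :
  all (fun a => 0 <= a) s -> (p <= q)%N ->
  \sum_(a <- take p s) a <= \sum_(a <- take q s) a.
Proof.
move=> hs hpq; rewrite -(subnKC hpq) takeD big_cat /= lerDl.
rewrite big_seq; apply: sumr_ge0 => a ha.
have : a \in s by move: ha => /mem_take /mem_drop.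
by move/allP: hs => hs /hs.
Qed.

Lemma sum_take_succ (s : seq R) (p : nat) :
  \sum_(a <- take p.+1 s) a = \sum_(a <- take p s) a + nth 0 s p.
Proof.
case: (ltnP p (size s)) => h.
  by rewrite (take_nth 0 h) -cats1 big_cat big_seq1.
rewrite !take_oversize ?nth_default ?addr0 //; exact: leqW.
Qed.

End Sorting.
Section Idx.
Variable R : realType.
Variable n : nat.
Variable d : 'I_n -> R.
Hypothesis d0 : forall i, 0 <= d i.
Local Notation ge := (fun a b : R => b <= a).

Let sI := sort (relpre d ge) (enum 'I_n).
Let s := sort ge [seq d i | i <- enum 'I_n].
Let sE : s = [seq d i | i <- sI].
Proof. by rewrite /s sort_map. Qed.

Let s_sorted : sorted ge s.
Proof. apply: sort_sorted => a b; exact: le_total. Qed.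
Let s_pos : all (fun a => 0 <= a) s.
Proof. by rewrite sE; apply/allP => a /mapP[i _ ->]. Qed.

Lemma S_sub (P : pred 'I_n) p : (#|P| <= p)%N ->
  \sum_(j | P j) d j <= \sum_(a <- take p s) a.
Proof.
move=> hP.
have hsub : subseq [seq d i | i <- [seq i <- sI | P i]] s.
  by rewrite sE; apply: map_subseq; apply: filter_subseq.
have hsz : size [seq d i | i <- [seq i <- sI | P i]] = #|P|.
  have ps : perm_eq sI (enum 'I_n) by rewrite perm_sort.
  rewrite size_map size_filter -sum1_count (perm_big _ ps) /= big_enum_cond -sum1_card.
  by apply: eq_bigl => i.
have h1 := @sum_take_mono R s _ _ s_pos (leq_trans (eq_leq hsz) hP).
have h2 := @sum_subseq_take R s _ s_sorted s_pos hsub.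
apply: le_trans h1; apply: le_trans h2.
have ps : perm_eq sI (enum 'I_n) by rewrite perm_sort.
rewrite big_map big_filter (perm_big _ ps) /= big_enum_cond /=.
by apply: le_refl.
Qed.
Lemma S_top k : (k <= n)%N -> exists T : seq 'I_n,
  [/\ uniq T, size T = k & \sum_(j <- T) d j = \sum_(a <- take k s) a].
Proof.
move=> hk; exists (take k sI); split.
- by apply: take_uniq; rewrite sort_uniq enum_uniq.
- by rewrite size_takel // size_sort size_enum_ord.
- by rewrite sE -map_take big_map.
Qed.
End Idx.
Section Reals.
Variable R : realType.

Lemma persp_conv (u v p q : R) : 0 <= p -> 0 <= q -> (p = 0 -> u = 0) -> (q = 0 -> v = 0) ->
  (u + v) ^+ 2 / (p + q) <= u ^+ 2 / p + v ^+ 2 / q.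
Proof.
move=> p0 q0 hp hq.
have [pe|pn0] := eqVneq p 0.
  by rewrite pe (hp pe) expr0n /= !mul0r !add0r.
have [qe|qn0] := eqVneq q 0.
  by rewrite qe (hq qe) expr0n /= !mul0r !addr0.
have pp : 0 < p by rewrite lt_def pn0.
have qp : 0 < q by rewrite lt_def qn0.
have pq : p + q != 0 by rewrite gt_eqF // addr_gt0.
rewrite -subr_ge0.
have -> : u ^+ 2 / p + v ^+ 2 / q - (u + v) ^+ 2 / (p + q) =
   (u * q - v * p) ^+ 2 / (p * q * (p + q)) by field; rewrite pn0 qn0 pq.
apply: divr_ge0; first exact: sqr_ge0.
by rewrite !mulr_ge0 // addr_ge0.
Qed.

Lemma pscale (c a b : R) : (c * a) ^+ 2 / (c * b) = c * (a ^+ 2 / b).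
Proof.
have [->|cn0] := eqVneq c 0; first by rewrite !mul0r expr0n /= mul0r.
have [->|bn0] := eqVneq b 0; first by rewrite !mulr0 invr0 !mulr0.
by field; rewrite cn0 bn0.
Qed.

Lemma sq_div (g z a : R) : (g * z * a) ^+ 2 / z = g ^+ 2 * a ^+ 2 * z.
Proof.
have [->|zn0] := eqVneq z 0; first by rewrite invr0 !mulr0.
by field.
Qed.

Lemma am_gm (g x z a : R) : 0 <= z -> (z = 0 -> x = 0) ->
  2 * g * x * a - g ^+ 2 * z * a ^+ 2 <= x ^+ 2 / z.
Proof.
move=> z0 hz.
have [ze|zn0] := eqVneq z 0.
  by rewrite ze (hz ze) invr0 !mulr0 !mul0r subrr.
have zp : 0 < z by rewrite lt_def zn0.
rewrite -subr_ge0.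
have -> : x ^+ 2 / z - (2 * g * x * a - g ^+ 2 * z * a ^+ 2) = (x - g * z * a) ^+ 2 / z
  by field.
by apply: divr_ge0; [exact: sqr_ge0| exact: ltW].
Qed.

Lemma tL (L Q : R) : 0 <= Q -> (forall t, 0 < t -> t <= 1 -> 0 <= t * L + t ^+ 2 * Q) -> 0 <= L.
Proof.
move=> Q0 h; rewrite leNgt; apply/negP => L0.
have QL : 0 < Q - L by rewrite subr_gt0 (lt_le_trans L0 Q0).
pose t := - L / (Q - L).
have t0 : 0 < t by rewrite divr_gt0 // oppr_gt0.
have t1 : t <= 1 by rewrite ler_pdivrMr // mul1r; lra.
have := h t t0 t1.
have -> : t * L + t ^+ 2 * Q = t * (- L ^+ 2 / (Q - L)).
  rewrite /t; field; by rewrite gt_eqF.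
rewrite pmulr_rge0 // mulNr oppr_ge0 => hh.
have : 0 < L ^+ 2 / (Q - L) by apply: divr_gt0 => //; nra.
by rewrite ltNge hh.
Qed.

End Reals.
Section Ana.
Variables (R : realType) (m n : nat) (A : 'M[R]_(m, n)) (y : 'cV[R]_m) (gamma : R).
Hypothesis hg : 0 < gamma.

Definition dot (u v : 'cV[R]_m) : R := \sum_(r < m) u r 0 * v r 0.
Definition Pz (x z : 'cV[R]_n) : R := \sum_(j < n) x j 0 ^+ 2 / z j 0.
Definition objR (x z : 'cV[R]_n) := sqnorm (y - A *m x) + gamma^-1 * Pz x z.
Definition good (x z : 'cV[R]_n) := forall j, 0 <= z j 0 /\ (z j 0 = 0 -> x j 0 = 0).

Lemma sqnormB (u v : 'cV[R]_m) : sqnorm (u - v) = sqnorm u - 2 * dot u v + sqnorm v.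
Proof.
rewrite /sqnorm /dot mulr_sumr -sumrB -big_split /=; apply: eq_bigr => r _.
rewrite !mxE; ring.
Qed.

Lemma dotC u v : dot u v = dot v u.
Proof. by apply: eq_bigr => r _; rewrite mulrC. Qed.

Lemma dotB (u w v : 'cV[R]_m) : dot (u - w) v = dot u v - dot w v.
Proof. rewrite /dot -sumrB; apply: eq_bigr => r _; rewrite !mxE; ring. Qed.

Lemma dotZ u v t : dot u (t *: v) = t * dot u v.
Proof. rewrite /dot mulr_sumr; apply: eq_bigr => r _; rewrite !mxE; ring. Qed.

Lemma sqnormZ (v : 'cV[R]_m) t : sqnorm (t *: v) = t ^+ 2 * sqnorm v.
Proof. rewrite /sqnorm mulr_sumr; apply: eq_bigr => r _; rewrite !mxE; ring. Qed.

Lemma dot_self u : dot u u = sqnorm u.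
Proof. by apply: eq_bigr => r _; rewrite expr2. Qed.

Lemma sqnorm_ge0 (u : 'cV[R]_m) : 0 <= sqnorm u.
Proof. by apply: sumr_ge0 => r _; apply: sqr_ge0. Qed.

Lemma dotA u (w : 'cV[R]_n) : dot u (A *m w) = \sum_(j < n) (A^T *m u) j 0 * w j 0.
Proof.
rewrite /dot.
under eq_bigr => r _ do rewrite mxE mulr_sumr.
rewrite exchange_big /=; apply: eq_bigr => j _.
rewrite mxE mulr_suml; apply: eq_bigr => r _; rewrite !mxE; ring.
Qed.

Lemma obj_good (x z : 'cV[R]_n) : good x z -> obj A y gamma x z = (objR x z)%:E.
Proof.
move=> hg'; rewrite /obj /objR /Pz.
have -> : (\sum_(i < n) persp (x i 0%R) (z i 0%R) = \sum_(i < n) ((x i 0 ^+ 2 / z i 0)%R)%:E)%E.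
  apply: eq_bigr => j _; rewrite /persp; case: eqP => [ze|//].
  by rewrite ((hg' j).2 ze) eqxx ze expr0n /= mul0r.
by rewrite sumEFin -EFinM -EFinD.
Qed.

Lemma persp_ge0 (a b : R) : 0 <= b -> (0 <= persp a b)%E.
Proof.
move=> b0; rewrite /persp; case: eqP => _; first by case: eqP.
by rewrite lee_fin divr_ge0 // sqr_ge0.
Qed.

Lemma obj_bad (x z : 'cV[R]_n) (j : 'I_n) : (forall i, 0 <= z i 0) -> z j 0 = 0 -> x j 0 != 0 ->
  obj A y gamma x z = +oo%E.
Proof.
move=> hz ze xn; rewrite /obj (bigD1 j) //= {1}/persp ze eqxx (negbTE xn).
rewrite addye; last first.
  rewrite gt_eqF // (lt_le_trans (ltNye 0)) //.
  by apply: sume_ge0 => i _; apply: persp_ge0.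
by rewrite mulry gtr0_sg ?invr_gt0 // mul1e addey.
Qed.

Lemma good_of_fin (x z : 'cV[R]_n) (c : R) : (forall i, 0 <= z i 0) -> (obj A y gamma x z <= c%:E)%E ->
  good x z.
Proof.
move=> hz hc j; split => // ze.
case: (eqVneq (x j 0) 0) => // xn.
by move: hc; rewrite (@obj_bad x z j hz ze xn).
Qed.

End Ana.
Section Main.
Variables (R : realType) (m n : nat) (A : 'M[R]_(m, n)) (y : 'cV[R]_m) (gamma : R).
Hypothesis hg : 0 < gamma.
Variables (k : nat) (xs zs : 'cV[R]_n).
Hypothesis hopt : optimalCC A y gamma k xs zs.
Hypothesis hgood : good xs zs.

Let eps := y - A *m xs.
Let a := A^T *m eps.

Lemma var_ineq (xb0 zb : 'cV[R]_n) : feasCC k xb0 zb ->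
  gamma * (\sum_(j < n) zb j 0 * a j 0 ^+ 2) <=
    2 * (\sum_(j < n) a j 0 * xs j 0) - gamma^-1 * Pz xs zs.
Proof.
move=> [hzb hsb].
have [[hzs hss] hmin] := hopt.
pose xb : 'cV[R]_n := \col_j (gamma * zb j 0 * a j 0).
rewrite -subr_ge0.
apply: (tL (sqnorm_ge0 (A *m (xb - xs)))) => t t0 t1.
pose xt := xs + t *: (xb - xs).
pose zt := zs + t *: (zb - zs).
have feast : feasCC k xt zt.
  split.
    move=> j; rewrite !mxE.
    have := hzs j; have := hzb j => /andP[h1 h2] /andP[h3 h4].
    apply/andP; split; nra.
  have -> : \sum_(i < n) zt i 0 = \sum_(i < n) zs i 0 + t * (\sum_(i < n) zb i 0 - \sum_(i < n) zs i 0).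
    rewrite /zt -sumrB mulr_sumr -big_split /=; apply: eq_bigr => i _.
    rewrite !mxE; ring.
  nra.
have goodt : good xt zt.
  move=> j; have := hzs j; have := hzb j => /andP[h1 h2] /andP[h3 h4].
  rewrite !mxE; split; first nra.
  move=> hz.
  have e1 : t * zb j 0 = 0 by nra.
  have e2 : (1 - t) * zs j 0 = 0 by nra.
  have zb0 : zb j 0 = 0 by move/eqP: e1; rewrite mulf_eq0 gt_eqF //= => /eqP.
  rewrite zb0 mulr0 mul0r.
  move/eqP: e2; rewrite mulf_eq0 => /orP[/eqP e|/eqP e].
    have -> : t = 1 by lra.
    by rewrite mul1r addrC subrK.
  by rewrite ((hgood j).2 e); ring.
have goodb : good xb zb.
  move=> j; have := hzb j => /andP[h1 h2]; split => // ze.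
  by rewrite mxE ze mulr0 mul0r.
have := hmin xt zt feast.
rewrite !obj_good // lee_fin /objR.
have -> : y - A *m xt = eps - t *: (A *m (xb - xs)).
  by rewrite /xt mulmxDr scalemxAr opprD addrA.
rewrite -/eps [sqnorm (eps - _)]sqnormB dotZ sqnormZ dotA -/a.
set v := A *m (xb - xs).
have hd : \sum_(j < n) a j 0 * (xb - xs) j 0 =
    gamma * (\sum_(j < n) zb j 0 * a j 0 ^+ 2) - \sum_(j < n) a j 0 * xs j 0.
  rewrite mulr_sumr -sumrB; apply: eq_bigr => j _; rewrite !mxE; ring.
rewrite hd.
have hP : Pz xt zt <= (1 - t) * Pz xs zs + t * (gamma ^+ 2 * \sum_(j < n) zb j 0 * a j 0 ^+ 2).
  rewrite /Pz !mulr_sumr -big_split /=; apply: ler_sum => j _.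
  have := hzs j; have := hzb j => /andP[h1 h2] /andP[h3 h4].
  have -> : xt j 0 = (1 - t) * xs j 0 + t * xb j 0 by rewrite !mxE; ring.
  have -> : zt j 0 = (1 - t) * zs j 0 + t * zb j 0 by rewrite !mxE; ring.
  apply: le_trans (persp_conv _ _ _ _) _.
  - by apply: mulr_ge0 => //; lra.
  - by apply: mulr_ge0 => //; lra.
  - move/eqP; rewrite mulf_eq0 => /orP[/eqP e|/eqP e]; first by rewrite e mul0r.
    by rewrite ((hgood j).2 e) mulr0.
  - move/eqP; rewrite mulf_eq0 gt_eqF //= => /eqP e.
    by rewrite mxE e mulr0 mul0r mulr0.
  by rewrite !pscale lerD2l mxE sq_div -mulrA [_ * zb j 0]mulrC.
move=> H.
set S1 := \sum_(j < n) a j 0 * xs j 0.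
set S2 := \sum_(j < n) zb j 0 * a j 0 ^+ 2.
set P0 := Pz xs zs.
set Pt := Pz xt zt.
move: H hP; rewrite -/S1 -/S2 -/P0 -/Pt => H hP.
set gi := gamma^-1.
have gi0 : 0 < gi by rewrite invr_gt0.
have hPt : gi * Pt <= gi * P0 - t * (gi * P0) + t * (gamma * S2).
  have := ler_wpM2l (ltW gi0) hP.
  have -> : gi * ((1 - t) * P0 + t * (gamma ^+ 2 * S2)) = gi * P0 - t * (gi * P0) + t * ((gi * gamma) * gamma * S2) by ring.
  by rewrite mulVf ?gt_eqF // mul1r.
move: H; rewrite -/gi => H.
lra.
Qed.

Lemma weak (x z : 'cV[R]_n) : good x z ->
  sqnorm eps + 2 * (\sum_(j < n) a j 0 * xs j 0) - gamma * (\sum_(j < n) z j 0 * a j 0 ^+ 2)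
   <= objR A y gamma x z.
Proof.
move=> gx; rewrite /objR.
have h1 := sqnorm_ge0 ((y - A *m x) - eps).
rewrite sqnormB dotB [dot (A *m x) _]dotC dotA -/a in h1.
have hy : dot y eps = sqnorm eps + \sum_(j < n) a j 0 * xs j 0.
  rewrite -dot_self {1}/eps dotB [dot (A *m xs) _]dotC dotA -/a; ring.
have hP : \sum_(j < n) (2 * gamma * x j 0 * a j 0 - gamma ^+ 2 * z j 0 * a j 0 ^+ 2) <= Pz x z.
  by apply: ler_sum => j _; apply: am_gm; case: (gx j).
set gi := gamma^-1.
have gi0 : 0 < gi by rewrite invr_gt0.
have := ler_wpM2l (ltW gi0) hP.
have -> : gi * \sum_(j < n) (2 * gamma * x j 0 * a j 0 - gamma ^+ 2 * z j 0 * a j 0 ^+ 2)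
  = 2 * (gi * gamma) * \sum_(j < n) a j 0 * x j 0
    - (gi * gamma) * gamma * \sum_(j < n) z j 0 * a j 0 ^+ 2.
  rewrite !mulr_sumr -sumrB; apply: eq_bigr => j _; ring.
rewrite mulVf ?gt_eqF // !mulr1 mul1r => h2.
move: h1; rewrite hy => h1.
set Sx := \sum_(j < n) a j 0 * x j 0 in h1 h2 *.
lra.
Qed.

End Main.
Unset Implicit Arguments.
Set Strict Implicit.
Theorem proposition2 (R : realType) (m n : nat) (A : 'M[R]_(m, n)) (y : 'cV[R]_m)
  (gamma : R) (k : nat) (hgamma : 0 < gamma) (hk1 : (1 <= k)%N) (hkn : (k < n)%N)
  (xs zs : 'cV[R]_n) (hopt : optimalCC A y gamma k xs zs)
  (zbar : R) (hzbar : (zetaC A y gamma k <= zbar%:E)%E)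
  (x z : 'cV[R]_n) (hxz : optimalC A y gamma k x z) (i : 'I_n) :
  (delta A y xs i <= delta_ord A y xs k.+1 ->
     (zetaCC A y gamma k - (gamma * (delta A y xs i - delta_ord A y xs k))%:E > zbar%:E)%E ->
     z i 0 = 0) /\
  (delta A y xs i >= delta_ord A y xs k ->
     (zetaCC A y gamma k + (gamma * (delta A y xs i - delta_ord A y xs k.+1))%:E > zbar%:E)%E ->
     z i 0 = 1).
Proof.
have [[hzs hss] hmin] := hopt.
have hz0 : forall j, 0 <= zs j 0 by move=> j; case/andP: (hzs j).
pose x0 : 'cV[R]_n := 0.
have f00 : feasCC k x0 x0.
  split => [j|]; first by rewrite mxE lexx ler01.
  by rewrite big1 ?ler0n // => j _; rewrite mxE.
have g00 : good x0 x0 by move=> j; rewrite mxE.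
have gs : good xs zs.
  apply: (good_of_fin hgamma (c := objR A y gamma x0 x0) hz0).
  by rewrite -obj_good //; exact: hmin.
have zCC : zetaCC A y gamma k = (objR A y gamma xs zs)%:E.
  rewrite -obj_good //; apply/le_anti/andP; split.
  - by apply: ereal_inf_lbound; exists xs, zs; split.
  - by apply/ereal_infP => v [x' [z' [hf ->]]]; exact: hmin.
have [[hzb [hsz _]] hminx] := hxz.
have hzC : forall j, 0 <= z j 0 by move=> j; case: (hzb j) => ->; rewrite ?ler01.
have hobjx : (obj A y gamma x z <= zbar%:E)%E.
  apply: le_trans hzbar; apply/ereal_infP => v [x' [z' [hf ->]]]; exact: hminx.
have gx : good x z := good_of_fin hgamma hzC hobjx.
have hx : objR A y gamma x z <= zbar by rewrite -lee_fin -obj_good.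
set d := delta A y xs.
have d0 : forall j, 0 <= d j by move=> j; exact: sqr_ge0.
set s := sort (fun a b : R => b <= a) [seq d j | j <- enum 'I_n].
have [T [uT sT hT]] := S_top d (ltnW hkn).
pose zb : 'cV[R]_n := \col_j ((j \in T)%:R).
have hzbT : forall F : 'I_n -> R, \sum_(j < n) zb j 0 * F j = \sum_(j <- T) F j.
  move=> F; rewrite (big_uniq _ uT) [RHS]big_mkcond /=; apply: eq_bigr => j _.
  by rewrite mxE; case: (j \in T); rewrite ?mul1r ?mul0r.
have fzb : feasCC k x0 zb.
  split => [j|]; first by rewrite mxE; case: (j \in T); rewrite ?lexx ?ler01.
  have := hzbT (fun _ => 1); under eq_bigr => j _ do rewrite mulr1.
  move=> ->; rewrite big_const_seq count_predT sT.
  suff -> : forall p, iter p (+%R 1) (0:R) = p%:R by [].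
  by elim=> //= p ->; rewrite -[p.+1]add1n natrD.
have hvi := var_ineq hgamma hopt gs fzb.
rewrite hzbT -/d hT -/s in hvi.
have hw := weak A y hgamma xs gx.
rewrite -/d in hw.
set Sum := fun p => \sum_(a <- take p s) a.
have key : objR A y gamma xs zs + gamma * (Sum k - \sum_(j < n) z j 0 * d j) <= objR A y gamma x z.
  move: hvi hw; rewrite /objR /Sum.
  set E := sqnorm (y - A *m xs).
  set S1 := \sum_(j < n) _ * xs j 0.
  set P0 := Pz xs zs. set Sk := \sum_(a <- _) a.
  move=> hvi hw; lra.
have [k' ek] : exists k', k = k'.+1 by exists k.-1; rewrite prednK.
have dk : delta_ord A y xs k = nth 0 s k' by rewrite /delta_ord ek.
have dk1 : delta_ord A y xs k.+1 = nth 0 s k by [].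
have Sk : Sum k = Sum k' + nth 0 s k' by rewrite /Sum ek sum_take_succ.
have Sk1 : Sum k.+1 = Sum k + nth 0 s k by rewrite /Sum sum_take_succ.
rewrite dk dk1 zCC.
have hsumz : \sum_(j < n) z j 0 * d j = \sum_(j | z j 0 == 1) d j.
  rewrite [RHS]big_mkcond; apply: eq_bigr => j _.
  by case: (hzb j) => ->; rewrite ?mul1r ?mul0r ?eqxx // eq_sym oner_eq0.
have hcard : (#|[pred j | z j 0%R == 1%R]| <= k)%N.
  have : \sum_(j < n) z j 0 = \sum_(j | z j 0 == 1) (1 : R).
    rewrite [RHS]big_mkcond; apply: eq_bigr => j _.
    by case: (hzb j) => ->; rewrite ?eqxx // eq_sym oner_eq0.
  by rewrite sumr_const => e; move: hsz; rewrite e ler_nat.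
split => _ H.
- case: (hzb i) => // zi1; exfalso.
  have ci : (#|[pred j | (z j 0%R == 1%R) && (j != i)]| <= k')%N.
    move: hcard; rewrite (cardD1x (A := fun j => z j 0 == 1) (j := i)) /=; last by rewrite zi1 eqxx.
    by rewrite ek add1n ltnS.
  have hS := S_sub d0 ci.
  have hb : \sum_(j | z j 0 == 1) d j = d i + \sum_(j | (z j 0 == 1) && (j != i)) d j.
    by rewrite (bigD1 i) //= zi1 eqxx.
  rewrite lte_fin in H.
  have := ler_wpM2l (ltW hgamma) hS.
  move: key hx H; rewrite hsumz hb Sk /Sum.
  set S' := \sum_(a <- take k' s) a.
  set Ob := objR A y gamma xs zs. set Ox := objR A y gamma x z.
  set Rs := \sum_(j | _) d j.
  move=> *; nra.
- case: (hzb i) => // zi0; exfalso.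
  pose Q := fun j => (z j 0 == 1) || (j == i).
  have eQ : forall j, (Q j && (j != i)) = (z j 0 == 1).
    move=> j; rewrite /Q; case: (eqVneq j i) => [->|_]; last by rewrite orbF andbT.
    by rewrite zi0 eq_sym oner_eq0.
  have ci : (#|[pred j | Q j]| <= k.+1)%N.
    rewrite (cardD1x (A := Q) (j := i)) /=; last by rewrite /Q eqxx orbT.
    rewrite add1n ltnS; apply: leq_trans hcard; rewrite leq_eqVlt; apply/orP; left.
    by apply/eqP; apply: eq_card => j; rewrite !inE eQ.
  have hS : \sum_(j | Q j) d j <= Sum k + nth 0 s k by rewrite -Sk1; exact: (S_sub (P := Q) d0 ci).
  have hb : \sum_(j | Q j) d j = d i + \sum_(j | z j 0 == 1) d j.
    by rewrite (bigD1 i) /= ?/Q ?eqxx ?orbT //; congr (_ + _); apply: eq_bigl => j; rewrite eQ.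
  rewrite lte_fin in H.
  have := ler_wpM2l (ltW hgamma) hS.
  move: key hx H; rewrite hsumz hb /Sum.
  set Skk := \sum_(a <- take k s) a.
  set Ob := objR A y gamma xs zs. set Ox := objR A y gamma x z.
  set Rs := \sum_(j | _) d j.
  move=> *; nra.
Qed.
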